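(* Let $\mathsf{S} \subseteq \{0,1\}^n$ be arbitrary and $f: \mathsf{S} \rightarrow \{0,1\}$ a partial Boolean function. Let $b \geq 2$ and $\mathsf{IP} : \{0, 1\}^b \times \{0, 1\}^b \to \{0, 1\}$ the Inner Product function. Then $\mathsf{D}_{\mathrm{cc}}^\rightarrow(f \circ \mathsf{IP})=\Omega(b \cdot \mathsf{D}_{\mathrm{dt}}^\rightarrow(f))$, where the implied constant is absolute.
   Context: $\mathsf{IP}(x_1,\dots,x_b,y_1,\dots,y_b)=\oplus_{i\in[b]}(x_i\wedge y_i)$. The composed (partial) function $f\circ\mathsf{IP}$ has Alice holding $x=(x_1,\dots,x_n)$, Bob holding $y=(y_1,\dots,y_n)$, $x_i,y_i\in\{0,1\}^b$, is defined on those $(x,y)$ with $(\mathsf{IP}(x_1,y_1),\dots,\mathsf{IP}(x_n,y_n))\in\mathsf{S}$, and takes value $f(\mathsf{IP}(x_1,y_1),\dots,\mathsf{IP}(x_n,y_n))$. $\mathsf{D}_{\mathrm{cc}}^\rightarrow(F)$ is the deterministic one-way communication complexity: the minimum, over protocols in which Alice sends a message $m(x)$ and Bob outputs a bit depending on $m(x)$ and $y$ that is correct on all inputs in the domain, of the maximum message length. $\mathsf{D}_{\mathrm{dt}}^\rightarrow(f)$ (non-adaptive decision tree complexity) is the minimum $k$ such that there exist indices $i_1,\dots,i_k\in[n]$ for which, for every assignment $a_{i_1},\dots,a_{i_k}$, $f$ is constant on $\mathsf{S}\cap\{x: x_{i_j}=a_{i_j}\ \forall j\}$. *)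

(* Defs.v *)
From mathcomp Require Import all_boot all_order all_algebra.
From mathcomp Require Import boolp.
Set Implicit Arguments. Unset Strict Implicit. Unset Printing Implicit Defensive.

Notation bits m := {ffun 'I_m -> bool}.

Definition IP (b : nat) (x y : bits b) : bool :=
  \big[addb/false]_(i < b) (x i && y i).

(* Alice's / Bob's input for f o IP : x = (x_1,...,x_n), x_i in {0,1}^b. *)
Notation blocks n b := {ffun 'I_n -> bits b}.

Definition ipvec (n b : nat) (x y : blocks n b) : bits n :=
  [ffun i => IP (x i) (y i)].

(* A deterministic one-way protocol for f o IP (partial function on S,
   f is given as a total function whose values off S are irrelevant) with
   maximum message length at most k: Alice sends m(x) (a bit string of length
   <= k), Bob outputs B(m(x), y); correct on all (x,y) in the domain. *)
Definition oneway_protocol_cost_le (n b : nat) (S : {set bits n})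
    (f : bits n -> bool) (k : nat) : Prop :=
  exists (m : blocks n b -> seq bool) (B : seq bool -> blocks n b -> bool),
    (forall x, size (m x) <= k) /\
    (forall x y, ipvec x y \in S -> B (m x) y = f (ipvec x y)).

Lemma oneway_protocol_exists (n b : nat) (S : {set bits n}) (f : bits n -> bool) :
  exists k, `[< oneway_protocol_cost_le b S f k >].
Proof.
exists #|{: blocks n b}|; apply/asboolP.
pose x0 : blocks n b := [ffun _ => [ffun _ => false]].
exists (fun x => nseq (index x (enum {: blocks n b})) true).
exists (fun s y => f (ipvec (nth x0 (enum {: blocks n b}) (size s)) y)).
split=> [x|x y _]; first by rewrite size_nseq ltnW // cardE index_mem mem_enum.
by rewrite size_nseq nth_index ?mem_enum.
Qed.

Definition Dcc_oneway (n b : nat) (S : {set bits n}) (f : bits n -> bool) : nat :=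
  ex_minn (oneway_protocol_exists b S f).

(* Non-adaptive decision tree: indices i_1..i_k such that for every assignment
   a, f is constant on S ∩ {x : x_{i_j} = a_{i_j} for all j}. *)
Definition nonadaptive_dt_cost_le (n : nat) (S : {set bits n})
    (f : bits n -> bool) (k : nat) : Prop :=
  exists I : k.-tuple 'I_n,
    forall a : k.-tuple bool, exists c : bool,
      forall x, x \in S -> (forall j : 'I_k, x (tnth I j) = tnth a j) -> f x = c.

Lemma nonadaptive_dt_exists (n : nat) (S : {set bits n}) (f : bits n -> bool) :
  exists k, `[< nonadaptive_dt_cost_le S f k >].
Proof.
exists n; apply/asboolP; exists (ord_tuple n) => a.
exists (f [ffun i => tnth a i]) => x _ Hx; congr f; apply/ffunP => i.
by rewrite ffunE -Hx tnth_ord_tuple.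
Qed.

Definition Ddt_nonadaptive (n : nat) (S : {set bits n}) (f : bits n -> bool) : nat :=
  ex_minn (nonadaptive_dt_exists S f).

(* Main.v *)
Require Import Defs.
From mathcomp Require Import all_boot all_order all_algebra.
From mathcomp Require Import zify ring.
From mathcomp Require Import boolp.
Set Implicit Arguments. Unset Strict Implicit. Unset Printing Implicit Defensive.

Section Comb.
Variable T : finType.
Variable Sig : {set T}.

Definition agr n (x y : n.-tuple T) : nat := \sum_(i < n) (tnth x i == tnth y i).
Definition inS n (x : n.-tuple T) : bool := all (fun a => a \in Sig) x.
Definition cnt n (F : n.-tuple T -> bool) : nat := \sum_(x : n.-tuple T) F x.

Lemma agr_cons n a b (x y : n.-tuple T) :
  agr [tuple of a :: x] [tuple of b :: y] = (a == b) + agr x y.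
Proof.
rewrite /agr big_ord_recl; congr (_ + _).
by apply: eq_bigr => i _; rewrite !tnthS.
Qed.

Lemma sum_cons n (h : n.+1.-tuple T -> nat) :
  \sum_(x : n.+1.-tuple T) h x = \sum_(a : T) \sum_(t : n.-tuple T) h [tuple of a :: t].
Proof.
rewrite pair_big /=.
rewrite (reindex (fun p : T * n.-tuple T => [tuple of p.1 :: p.2])) //=.
exists (fun x : n.+1.-tuple T => (thead x, [tuple of behead x])).
  by move=> [a t] _ /=; congr pair; apply: val_inj.
by move=> x _; case/tupleP: x => a t; apply: val_inj.
Qed.

Lemma cnt_cons n (F : n.+1.-tuple T -> bool) :
  (forall x, F x -> inS x) ->
  cnt F = \sum_(a in Sig) cnt (fun t : n.-tuple T => F [tuple of a :: t]).
Proof.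
move=> HF; rewrite /cnt sum_cons (bigID (mem Sig)) /= [X in _ + X]big1 ?addn0 //.
move=> a aS; apply: big1 => t _.
case E: (F _) => //; move: (HF _ E); rewrite /inS /=.
by move/negbTE: aS => /= ->.
Qed.

Lemma scalar (C X Y Z P m : nat) : P < C -> C <= m^2 * P -> X <= m * P -> Y <= m * P ->
  Z * C = X * Y -> C + X + Y + Z <= m.+1 ^ 2 * P.
Proof.
move=> h1 h2 h3 h4 h5.
have hC : 0 < C by lia.
rewrite -(leq_pmul2r hC).
have e1 : X * Y <= (m * P) * (m * P) by apply: leq_mul.
have e2 : (C - P) * (m^2 * P - C) >= 0 by [].
nia.
Qed.


Lemma step (A : {set T}) (f g : T -> nat) (W N m : nat) :
  #|A| = m.+1 ->
  (forall a b, a \in A -> b \in A -> a != b -> f a * g b * W <= N^2) ->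
  (forall a, a \in A -> f a * g a * W <= m^2 * N^2) ->
  (\sum_(a in A) f a) * (\sum_(b in A) g b) * W <= (m.+1 * N)^2.
Proof.
move=> cA H1 H2.
have cst : forall a1, a1 \in A -> \sum_(i in A | i != a1) N^2 = m * N^2.
  move=> a1 a1A; have := sum_nat_const (mem A) (N^2); rewrite (bigD1 a1) //= cA.
  rewrite mulSn => /eqP; rewrite eqn_add2l => /eqP //.
case: (pickP [pred a | (a \in A) && (N^2 < f a * g a * W)]) => [a1 /andP[a1A hbig] | none].
  rewrite (bigD1 a1) // [X in _ * X * _](bigD1 a1) //=.
  set F' := \sum_(i in A | i != a1) f i.
  set G' := \sum_(i in A | i != a1) g i.
  have hX : f a1 * G' * W <= m * N^2.
    rewrite /G' big_distrr big_distrl /= -(cst a1 a1A).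
    apply: leq_sum => i /andP[iA ne]; apply: H1 => //; by rewrite eq_sym.
  have hY : g a1 * F' * W <= m * N^2.
    rewrite /F' big_distrr big_distrl /= -(cst a1 a1A).
    apply: leq_sum => i /andP[iA ne]; rewrite [g a1 * f i]mulnC; apply: H1 => //.
  have e : F' * G' * W * (f a1 * g a1 * W) = (f a1 * G' * W) * (g a1 * F' * W) by ring.
  have := scalar hbig (H2 _ a1A) hX hY e.
  have -> : (f a1 + F') * (g a1 + G') * W = f a1 * g a1 * W + f a1 * G' * W + g a1 * F' * W + F' * G' * W by ring.
  by rewrite expnMn.
have hp : forall a b, a \in A -> b \in A -> f a * g b * W <= N^2.
  move=> a b aA bA; case: (eqVneq a b) => [<-|ne]; last exact: H1.
  by move: (none a) => /=; rewrite aA /= ltnNge => /negbFE.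
rewrite big_distrl big_distrl /=.
apply: (@leq_trans (\sum_(a in A) (m.+1 * N^2))).
  apply: leq_sum => a aA; rewrite big_distrr big_distrl /=.
  rewrite -cA -sum_nat_const; apply: leq_sum => b bA; exact: hp.
by rewrite sum_nat_const cA expnMn mulnA.
Qed.


Lemma cnt_le1 (H : 0.-tuple T -> bool) : cnt H <= 1.
Proof.
rewrite /cnt; apply: (@leq_trans (\sum_(x : 0.-tuple T) 1)).
  by apply: leq_sum => x _; case: (H x).
by rewrite sum1_card card_tuple expn0.
Qed.

Lemma cross (hq : 1 < #|Sig|) n : forall t (F G : n.-tuple T -> bool),
  (forall x, F x -> inS x) -> (forall y, G y -> inS y) ->
  (forall x y, F x -> G y -> t <= agr x y) ->
  cnt F * cnt G * (#|Sig|.-1)^(2*t) <= (#|Sig|^n)^2.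
Proof.
set m := #|Sig|.-1.
have hqm : #|Sig| = m.+1 by rewrite /m prednK // ltnW.
have m1 : 0 < m by rewrite /m -ltnS prednK // ltnW.
elim: n => [|n IH] t F G HF HG HFG.
  case: (pickP F) => [x Fx|nF]; last by rewrite /cnt big1 ?mul0n // => x _; rewrite nF.
  case: (pickP G) => [y Gy|nG]; last by rewrite /cnt [X in _ * X * _]big1 ?muln0 ?mul0n // => z _; rewrite nG.
  have := HFG x y Fx Gy; rewrite /agr big_ord0 leqn0 => /eqP ->.
  rewrite muln0 !expn0 muln1; exact: (leq_mul (cnt_le1 F) (cnt_le1 G)).
rewrite (cnt_cons HF) (cnt_cons HG) [#|Sig| ^ n.+1]expnS {1}hqm.
apply: step => //.
- move=> a b aS bS ne; apply: IH.
  + by move=> x /HF /andP[].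
  + by move=> x /HG /andP[].
  + by move=> x y Fx Gy; have := HFG _ _ Fx Gy; rewrite agr_cons (negbTE ne) add0n.
- move=> a aS; case: t HFG => [|t] HFG.
    have := IH 0 (fun x => F [tuple of a :: x]) (fun x => G [tuple of a :: x]).
    rewrite muln0 expn0 !muln1 => h; apply: leq_trans (h _ _ _) _.
    + by move=> x /HF /andP[].
    + by move=> x /HG /andP[].
    + by [].
    + by rewrite -{1}(mul1n (_ ^ 2)) leq_mul2r expn_gt0 m1 orbT.
  have := IH t (fun x => F [tuple of a :: x]) (fun x => G [tuple of a :: x]).
  move=> h; rewrite mulnS expnD mulnA [_ * m ^ 2]mulnC -mulnA mulnA.
  rewrite -mulnA leq_mul2l; apply/orP; right.
  apply: h.
  + by move=> x /HF /andP[].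
  + by move=> x /HG /andP[].
  + by move=> x y Fx Gy; have := HFG _ _ Fx Gy; rewrite agr_cons eqxx.
Qed.


Lemma cnt_inS n : cnt (@inS n) = #|Sig|^n.
Proof.
elim: n => [|n IH].
  rewrite /cnt (eq_bigr (fun _ => 1)) ?sum1_card ?card_tuple // => x _.
  by rewrite tuple0.
rewrite (@cnt_cons n (@inS n.+1)) //.
rewrite (@eq_bigr _ _ _ _ _ _ _ (fun _ => cnt (@inS n))); last first.
  move=> a aS; rewrite /cnt; apply: eq_bigr => x _.
  by rewrite /inS /= aS.
by rewrite sum_nat_const IH expnS.
Qed.

End Comb.


Definition z0 b : bits b := [ffun _ => false].
Definition wv b (p r : 'I_b) (b1 b2 : bool) : bits b :=
  [ffun i => ((i == p) && b1) (+) ((i == r) && b2)].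

Lemma IP_pt b (u : bits b) p c :
  \big[addb/false]_(i < b) (u i && ((i == p) && c)) = u p && c.
Proof.
rewrite (bigD1 p) //= eqxx big1 ?addbF // => i /negbTE ->.
by rewrite andbF.
Qed.

Lemma IP_wv b (u : bits b) p r b1 b2 :
  IP u (wv p r b1 b2) = (u p && b1) (+) (u r && b2).
Proof.
rewrite /IP (eq_bigr (fun i => (u i && ((i == p) && b1)) (+) (u i && ((i == r) && b2)))).
  by rewrite big_split /= !IP_pt.
by move=> i _; rewrite ffunE; case: (u i).
Qed.

Lemma IP2 b (u v : bits b) (al be : bool) : u != z0 b -> v != z0 b -> (u = v -> al = be) ->
  exists w, IP u w = al /\ IP v w = be.
Proof.
move=> nu nv huv.
have ex1 : forall x : bits b, x != z0 b -> exists j, x j.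
  move=> x nx; case: (pickP (fun j => x j)) => [j xj|hn]; first by exists j.
  have e : x = z0 b by apply/ffunP => i; rewrite ffunE hn.
  by rewrite e eqxx in nx.
case: (ex1 u nu) => j uj; case: (ex1 v nv) => l vl.
case: (eqVneq u v) => [e|ne].
  exists (wv j j al false); rewrite -e !IP_wv uj -(huv e).
  by case: (al).
case: (pickP (fun i => u i != v i)) => [p hp|hn]; last first.
  have e : u = v by apply/ffunP => i; move: (hn i) => /negbFE /eqP.
  by rewrite e eqxx in ne.
move: hp; case up: (u p); case vp: (v p) => // _.
  exists (wv p l (al (+) (u l && be)) be); rewrite !IP_wv up vp vl.
  by case: (al); case: (be); case: (u l).
exists (wv p j (be (+) (v j && al)) al); rewrite !IP_wv up vp uj.
by case: (al); case: (be); case: (v j).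
Qed.

Lemma conflict n b (S : {set bits n}) f (m : blocks n b -> seq bool)
  (B : seq bool -> blocks n b -> bool)
  (HB : forall x y, ipvec x y \in S -> B (m x) y = f (ipvec x y))
  (X X' : blocks n b) : (forall i, X i != z0 b) -> (forall i, X' i != z0 b) -> m X = m X' ->
  nonadaptive_dt_cost_le S f #|[set i | X i == X' i]|.
Proof.
move=> nX nX' eqm.
set E := [set i | X i == X' i].
exists (enum_tuple (mem E)) => a.
set I := enum_tuple (mem E).
case: (pickP [pred z | (z \in S) && [forall j, z (tnth I j) == tnth a j]]) =>
   [z1 /andP[z1S /forallP z1a] | none]; last first.
  exists false => z zS za; move: (none z) => /=; rewrite zS /=.
  have -> // : [forall j, z (tnth I j) == tnth a j] by apply/forallP => j; apply/eqP; exact: za.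
exists (f z1) => z zS za.
have agreeE : forall i, i \in E -> z i = z1 i.
  move=> i iE; have : i \in I by rewrite /I /= mem_enum.
  case/tnthP => j ->; rewrite za; apply/esym/eqP; exact: z1a.
pose y : blocks n b := [ffun i => odflt (z0 b) [pick w | (IP (X i) w == z i) && (IP (X' i) w == z1 i)]].
have hy : forall i, IP (X i) (y i) = z i /\ IP (X' i) (y i) = z1 i.
  move=> i; rewrite ffunE; case: pickP => [w /andP[/eqP h1 /eqP h2] | hn] //=.
  exfalso.
  have hh : X i = X' i -> z i = z1 i by move=> e; apply: agreeE; rewrite inE e eqxx.
  have [w [h1 h2]] := IP2 (nX i) (nX' i) hh.
  by move: (hn w); rewrite /= h1 h2 !eqxx.
have e1 : ipvec X y = z by apply/ffunP => i; rewrite ffunE (hy i).1.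
have e2 : ipvec X' y = z1 by apply/ffunP => i; rewrite ffunE (hy i).2.
by rewrite -e1 -(HB X y) ?e1 // eqm HB ?e2.
Qed.

Section Main.

Lemma enc_inj k (s s' : seq bool) : size s <= k -> size s' <= k ->
  ((inord (size s) : 'I_k.+1), [ffun i : 'I_k => nth false s i]) =
  ((inord (size s') : 'I_k.+1), [ffun i : 'I_k => nth false s' i]) -> s = s'.
Proof.
move=> hs hs' [e1 e2].
have es : size s = size s'.
  by move: (congr1 (@nat_of_ord _) e1); rewrite !inordK // ltnS.
apply: (eq_from_nth (x0 := false) es) => i hi.
have hik : i < k by apply: leq_trans hi hs.
by move/ffunP: e2 => /(_ (Ordinal hik)); rewrite !ffunE.
Qed.

Lemma main_nat n b (S : {set bits n}) (f : bits n -> bool) :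
  2 <= b -> b * Ddt_nonadaptive S f <= 4 * Dcc_oneway b S f.
Proof.
move=> hb.
have [m [B [Hsz HB]]] : oneway_protocol_cost_le b S f (Dcc_oneway b S f).
  by rewrite /Dcc_oneway; case: ex_minnP => k' /asboolP.
have hd : forall e, nonadaptive_dt_cost_le S f e -> Ddt_nonadaptive S f <= e.
  move=> e he; rewrite /Ddt_nonadaptive; case: ex_minnP => d' _ hmin.
  by apply: hmin; apply/asboolP.
set k := Dcc_oneway b S f in Hsz HB *.
set d := Ddt_nonadaptive S f in hd *.
case: d hd => [|d] hd; first by rewrite muln0.
set Sig := [set~ z0 b].
have cq : #|Sig| = (2^b).-1 by rewrite cardsC1 card_ffun card_bool card_ord.
have hq : 1 < #|Sig|.
  rewrite cq; have : 2 ^ 2 <= 2 ^ b by rewrite leq_exp2l.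
  rewrite (expnS 2 1) expn1; lia.
set mm := #|Sig|.-1.
pose tofun (x : n.-tuple (bits b)) : blocks n b := [ffun i => tnth x i].
pose enc (s : seq bool) : ('I_k.+1 * {ffun 'I_k -> bool})%type :=
  (inord (size s), [ffun i : 'I_k => nth false s i]).
pose M e := fun x : n.-tuple (bits b) => inS Sig x && (enc (m (tofun x)) == e).
have hM : forall e, cnt (M e) * mm ^ d.+1 <= #|Sig| ^ n.
  move=> e.
  have := @cross _ Sig hq n d.+1 (M e) (M e).
  have hin : forall x, M e x -> inS Sig x by move=> x /andP[].
  move=> /(_ hin hin) h.
  rewrite -leq_sqr expnMn.
  suff : cnt (M e) * cnt (M e) * mm ^ (2 * d.+1) <= (#|Sig| ^ n) ^ 2.
    by rewrite [2 * _]mulnC expnM mulnn.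
  apply: h => x y /andP[ix /eqP ex] /andP[iy /eqP ey].
  have nz : forall x, inS Sig x -> forall i, tofun x i != z0 b.
    move=> x0 ix0 i; rewrite ffunE; move/all_tnthP: ix0 => /(_ i).
    by rewrite in_setC1.
  have em : m (tofun x) = m (tofun y).
    by apply: enc_inj (Hsz _) (Hsz _) _; rewrite -/(enc _) -/(enc _) ex ey.
  apply: leq_trans (hd _ (conflict HB (nz _ ix) (nz _ iy) em)) _.
  rewrite /agr -sum1_card big_mkcond /=; apply: leq_sum => i _.
  by rewrite inE !ffunE; case: (_ == _).
have hsum : cnt (inS Sig (n:=n)) = \sum_(e : ('I_k.+1 * {ffun 'I_k -> bool})%type) cnt (M e).
  rewrite /cnt [RHS]exchange_big /=; apply: eq_bigr => x _.
  rewrite (bigD1 (enc (m (tofun x)))) //= /M eqxx andbT big1 ?addn0 // => e ne.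
  by rewrite eq_sym (negbTE ne) andbF.
have h1 : #|Sig| ^ n * mm ^ d.+1 <= #|{: ('I_k.+1 * {ffun 'I_k -> bool})%type}| * #|Sig| ^ n.
  rewrite -{1}(cnt_inS Sig n) hsum big_distrl /= -sum_nat_const.
  by apply: leq_sum => e _; exact: hM.
have h2 : mm ^ d.+1 <= k.+1 * 2 ^ k.
  move: h1; rewrite mulnC leq_pmul2r ?expn_gt0 ?(ltnW hq) //.
  by rewrite card_prod card_ord card_ffun card_bool card_ord.
have h3 : 2 ^ b.-1 <= mm.
  rewrite /mm cq.
  have hb1 : b = (b.-1).+1 by rewrite prednK // ltnW.
  have : 2 ^ 1 <= 2 ^ b.-1 by rewrite leq_exp2l // -ltnS -hb1.
  have e2 : 2 ^ b = 2 * 2 ^ b.-1 by rewrite {1}hb1 expnS.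
  rewrite e2; lia.
have h4 : 2 ^ (b.-1 * d.+1) <= 2 ^ (k + k).
  rewrite expnM expnD; apply: leq_trans (leq_trans _ h2) _.
    by rewrite leq_exp2r.
  by rewrite leq_mul2r ltn_expl ?orbT.
move: h4; rewrite leq_exp2l // => h4.
nia.
Qed.

End Main.

From mathcomp Require Import lra.
Import Order.TTheory GRing.Theory Num.Theory.
Local Open Scope ring_scope.

Theorem theorem1p2 :
  exists c : rat, 0 < c /\
    forall (n b : nat) (S : {set bits n}) (f : bits n -> bool),
      (2 <= b)%N ->
      c * ((b * Ddt_nonadaptive S f)%N)%:R <= ((Dcc_oneway b S f)%N)%:R.
Proof.
exists (4%:R)^-1; split; first by rewrite invr_gt0.
move=> n b S f hb.
rewrite ler_pdivrMl // -natrM ler_nat.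
exact: main_nat.
Qed.
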